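(* Let $\mu\in\Delta_q$ and $\delta\in(0,1]$. Let $\mathcal R(\mu,\delta)$ be the set of seeds $r=((x_1,p_1),(x_2,p_2),\dots)$ such that $p_{i^*}\ge(1-\delta)\mu(x_{i^*})$, where $i^*=\min\{i: p_i\le\mu(x_i)\}$. Then for every $\upsilon\in\Delta_q$, $$\mathbb P_{r\sim\mathcal R(\mu,\delta)}\big[\mathrm{MinCoupler}(\mu,r)\ne\mathrm{MinCoupler}(\upsilon,r)\big]\ge\frac{1-\upsilon_{\max}}{2}\cdot\mathbb P_{x\sim\mu}\big[\upsilon(x)<(1-\delta)\mu(x)\big],$$ where $\upsilon_{\max}=\max_{x\in[q]}\upsilon(x)$ and $r\sim\mathcal R(\mu,\delta)$ denotes a uniformly random seed conditioned on lying in $\mathcal R(\mu,\delta)$.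
   Context: $\Delta_q$ is the probability simplex on $[q]$. A uniformly random seed is an infinite sequence of i.i.d. pairs $(x_k,p_k)$ with $x_k$ uniform on $[q]$ and $p_k$ uniform on $[0,1]$, independent. $\mathrm{MinCoupler}(\nu,r)$ outputs $x_{i^*}$ with $i^*=\min\{k: p_k\le\nu(x_k)\}$. *)

(* Defs.v *)
From HB Require Import structures.
From mathcomp Require Import all_boot all_order all_algebra.
From mathcomp Require Import boolp classical_sets reals constructive_ereal ereal measure lebesgue_measure.
Set Implicit Arguments. Unset Strict Implicit. Unset Printing Implicit Defensive.
Import Order.TTheory GRing.Theory Num.Theory.
Local Open Scope classical_set_scope.
Local Open Scope ring_scope.

Definition in_simplex (R : realType) (q : nat) (nu : 'I_q -> R) : Prop :=
  (forall a, 0 <= nu a) /\ \sum_(a < q) nu a = 1.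

Definition nu_max (R : realType) (q : nat) (nu : 'I_q -> R) : R :=
  \big[Num.max/0]_(a < q) nu a.

Definition unif01 (R : realType) (B : set R) : \bar R :=
  (@lebesgue_measure R) (B `&` `[0%R, 1%R]).

(* A uniformly random seed, modelled on an abstract probability space:
   x k : T -> 'I_q and p k : T -> R (k : nat, indexing from 0) are
   i.i.d. pairs, x k uniform on [q], p k uniform on [0,1], independent. *)
Definition uniform_seed (R : realType) (q : nat) (d : measure_display)
    (T : measurableType d) (P : probability T R)
    (x : nat -> T -> 'I_q) (p : nat -> T -> R) : Prop :=
  (forall k a, measurable (x k @^-1` [set a])) /\
  (forall k, measurable_fun setT (p k)) /\
  (forall (n : nat) (a : nat -> 'I_q) (B : nat -> set R),
     (forall k, measurable (B k)) ->
     P [set t | forall k, (k < n)%N -> x k t = a k /\ B k (p k t)] =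
     (\prod_(k < n) ((q%:R)^-1%:E * unif01 (B k)))%E).

Definition hitb (R : realType) (q : nat) (T : Type) (x : nat -> T -> 'I_q)
    (p : nat -> T -> R) (nu : 'I_q -> R) (t : T) (i : nat) : bool :=
  `[< p i t <= nu (x i t) >].

Definition istar (R : realType) (q : nat) (T : Type) (x : nat -> T -> 'I_q)
    (p : nat -> T -> R) (nu : 'I_q -> R) (t : T) : option nat :=
  match pselect (exists i, hitb x p nu t i) with
  | left h => Some (ex_minn h)
  | right _ => None
  end.

(* MinCoupler(nu, r) = x_{i^*}; None on the null set where i^* is undefined. *)
Definition MinCoupler (R : realType) (q : nat) (T : Type) (x : nat -> T -> 'I_q)
    (p : nat -> T -> R) (nu : 'I_q -> R) (t : T) : option 'I_q :=
  omap (fun i => x i t) (istar x p nu t).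

Definition Rset (R : realType) (q : nat) (T : Type) (x : nat -> T -> 'I_q)
    (p : nat -> T -> R) (mu : 'I_q -> R) (delta : R) : set T :=
  [set t | exists i, istar x p mu t = Some i /\ (1 - delta) * mu (x i t) <= p i t].

Definition condprob (R : realType) (d : measure_display) (T : measurableType d)
    (P : probability T R) (A B : set T) : R :=
  fine (P (A `&` B)) / fine (P B).

(* Main.v *)
Require Import Defs.
From HB Require Import structures.
From mathcomp Require Import all_boot all_order all_algebra.
From mathcomp Require Import boolp classical_sets reals constructive_ereal ereal measure lebesgue_measure.
From mathcomp Require Import cardinality topology normedtype sequences.
From mathcomp Require Import ring lra zify.
Import Order.TTheory GRing.Theory Num.Theory.
Local Open Scope classical_set_scope.
Local Open Scope ring_scope.
Set Implicit Arguments. Unset Strict Implicit. Unset Printing Implicit Defensive.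
Lemma geomE (R : realType) (a z : R) : 0 <= z -> z < 1 ->
  (\sum_(k <oo) ((a * z ^+ k)%:E) = (a * (1 - z)^-1)%:E)%E.
Proof.
move=> z0 z1; apply: cvg_lim => //.
apply: cvg_EFin; first by apply: nearW => n; rewrite /eseries /= sumEFin.
rewrite [X in X @ _ --> _](_ : _ = series (geometric a z)); last first.
  by apply/funext => n; rewrite /= /eseries /= sumEFin.
by apply: cvg_geometric_series; rewrite ger0_norm.
Qed.

Lemma unif_cc (R : realType) (l u : R) : 0 <= l -> l <= u -> u <= 1 ->
  unif01 `[l, u] = (u - l)%:E.
Proof.
move=> l0 lu u1; rewrite /unif01 setIidl; last first.
  move=> r /=; rewrite !in_itv /= => /andP [lr ru].
  by rewrite (le_trans l0 lr) (le_trans ru u1).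
rewrite lebesgue_measure_itv /= lte_fin; case: ltP => [//|ul].
have -> : u = l by apply/le_anti; rewrite lu ul.
by rewrite subrr.
Qed.

Lemma unif_oinf (R : realType) (c : R) : 0 <= c -> c <= 1 ->
  unif01 `]c, +oo[ = (1 - c)%:E.
Proof.
move=> c0 c1; rewrite /unif01.
have -> : `]c, +oo[ `&` `[0%R, 1%R] = `]c, 1%R]%classic.
  apply/seteqP; split => r /=; rewrite !in_itv /= ?andbT.
    by move=> [-> /andP [_ ->]].
  move=> /andP [cr r1]; split => //; rewrite r1 andbT.
  exact: le_trans c0 (ltW cr).
rewrite lebesgue_measure_itv /= lte_fin; case: ltP => [//|ul].
have -> : c = 1 by apply/le_anti; rewrite c1 ul.
by rewrite subrr.
Qed.

Lemma unif0 (R : realType) : unif01 (set0 : set R) = 0%:E.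
Proof. by rewrite /unif01 set0I measure0. Qed.
Section Seed.
Variables (R : realType) (Q : nat) (d : measure_display) (T : measurableType d)
  (P : probability T R) (x : nat -> T -> 'I_Q.+1) (p : nat -> T -> R).
Hypothesis HS : uniform_seed P x p.
Local Notation q := Q.+1.

Definition Cyl (N : nat) (C : nat -> 'I_q -> set R) : set T :=
  [set t | forall k, (k < N)%N -> C k (x k t) (p k t)].

Lemma mx k a : measurable (x k @^-1` [set a]). Proof. by case: HS. Qed.
Lemma mp k B : measurable B -> measurable (p k @^-1` B).
Proof. case: HS => _ [H _] mB. by rewrite -[_ @^-1` _]setTI; apply: H. Qed.

Lemma Cyl_meas N C : (forall k a, measurable (C k a)) -> measurable (Cyl N C).
Proof.
move=> mC; elim: N => [|N IH].
  by rewrite (_ : Cyl 0 C = setT) //; apply/seteqP; split => t //= _ k.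
rewrite (_ : Cyl N.+1 C = Cyl N C `&`
   \bigcup_(a in [set: 'I_q]) (x N @^-1` [set a] `&` p N @^-1` C N a)).
  apply: measurableI => //; apply: fin_bigcup_measurable; first exact: finite_finset.
  by move=> a _; apply: measurableI; [exact: mx | exact: mp].
apply/seteqP; split => t /=.
  move=> H; split; first by move=> k kN; apply: H; apply: ltnW.
  by exists (x N t) => //; split => //; apply: H.
move=> [H [a _ [/= <- HC]]] k; rewrite ltnS leq_eqVlt => /orP [/eqP -> //|].
exact: H.
Qed.

Lemma P_finU (I : eqType) (F : I -> set T) (r : seq I) :
  (forall i, measurable (F i)) -> (forall i j, i != j -> F i `&` F j = set0) ->
  uniq r -> measurable [set t | exists2 i, i \in r & F i t] /\
  P [set t | exists2 i, i \in r & F i t] = (\sum_(i <- r) P (F i))%E.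
Proof.
move=> mF dF; elim: r => [|i r IH] /=.
  rewrite (_ : [set t | exists2 i, i \in [::] & F i t] = set0) ?measure0 ?big_nil //.
  by apply/seteqP; split => t // [i].
move=> /andP [ir ur]; have [mr Pr] := IH ur.
have E : [set t | exists2 j, j \in i :: r & F j t] = F i `|` [set t | exists2 i, i \in r & F i t].
  apply/seteqP; split => t /=.
    by move=> [j]; rewrite in_cons => /orP [/eqP -> | jr Fj]; [left | right; exists j].
  by move=> [Fi | [j jr Fj]]; [exists i; rewrite ?mem_head | exists j; rewrite // in_cons jr orbT].
rewrite E; split; first exact: measurableU.
rewrite measureU //; first by rewrite big_cons -Pr.
apply/seteqP; split => t // [Fi [j jr Fj]].
have : i != j by apply: contraNneq ir => ->.
by move/dF => /seteqP [H _]; apply: (H t).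
Qed.

Definition af N (f : {ffun 'I_N -> 'I_q}) (k : nat) : 'I_q :=
  if insub k is Some i then f i else ord0.

Lemma afE N (f : {ffun 'I_N -> 'I_q}) (i : 'I_N) : af f i = f i.
Proof. by rewrite /af valK. Qed.

Lemma Cyl_prob N C u : (forall k a, measurable (C k a)) ->
  (forall k a, unif01 (C k a) = (u k a)%:E) ->
  P (Cyl N C) = (\prod_(k < N) (q%:R^-1 * \sum_(a : 'I_q) u k a))%:E.
Proof.
move=> mC hu.
pose A (f : {ffun 'I_N -> 'I_q}) := [set t | forall k, (k < N)%N ->
   x k t = af f k /\ C k (af f k) (p k t)].
have mA f : measurable (A f).
  rewrite (_ : A f = Cyl N (fun k b => if b == af f k then C k b else set0)).
    by apply: Cyl_meas => k b; case: ifP.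
  apply/seteqP; split => t /= H k kN.
    by have [-> ?] := H k kN; rewrite eqxx.
  by have := H k kN; case: eqP => // ->.
have dA f g : f != g -> A f `&` A g = set0.
  move=> fg; apply/seteqP; split => t // [Hf Hg]; move: fg => /eqP; apply.
  apply/ffunP => i; have [e1 _] := Hf i (ltn_ord i); have [e2 _] := Hg i (ltn_ord i).
  by rewrite -!afE -e1 -e2.
have [_ PU] := P_finU mA dA (index_enum_uniq {ffun 'I_N -> 'I_q}).
have E : Cyl N C = [set t | exists2 f, f \in index_enum {ffun 'I_N -> 'I_q} & A f t].
  apply/seteqP; split => t /=.
    move=> H; exists [ffun i : 'I_N => x i t]; first by rewrite mem_index_enum.
    move=> k kN; rewrite /af insubT /= ffunE; split => //; exact: H.
  by move=> [f _ H] k kN; have [-> ?] := H k kN.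
rewrite E PU.
case: HS => _ [_ H].
under eq_bigr => f _ do rewrite (H N (af f) (fun k => C k (af f k)) (fun k => mC _ _)).
under eq_bigr => f _ do under eq_bigr => k _ do rewrite hu -EFinM.
under eq_bigr => f _ do rewrite prodEFin.
rewrite sumEFin; congr EFin.
rewrite [RHS](eq_bigr (fun k : 'I_N => \sum_(a : 'I_q) q%:R^-1 * u k a));
  last by move=> k _; rewrite mulr_sumr.
rewrite bigA_distr_bigA; apply: eq_bigr => f _; apply: eq_bigr => k _.
by rewrite afE.
Qed.
Lemma hitbP nu t i : hitb x p nu t i = (p i t <= nu (x i t)).
Proof. by apply/idP/idP => [/asboolP //|H]; apply/asboolP. Qed.

Lemma istarP (nu : 'I_q -> R) t k : istar x p nu t = Some k <->
  (forall i, (i < k)%N -> ~~ hitb x p nu t i) /\ hitb x p nu t k.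
Proof.
rewrite /istar; case: pselect => [h|nh]; last first.
  by split => // -[_ hk]; exfalso; apply: nh; exists k.
case: ex_minnP => m hm hmin; split.
  move=> [<-]; split => // i im; apply/negP => hi; have := hmin i hi.
  by rewrite leqNgt im.
move=> [hlt hk]; congr Some; apply/eqP; rewrite eqn_leq hmin //= leqNgt.
by apply/negP => /hlt; rewrite hm.
Qed.

Definition Cfirst (nu : 'I_q -> R) k (L : 'I_q -> set R) : nat -> 'I_q -> set R :=
  fun j b => if (j < k)%N then `]nu b, +oo[%classic else L b.

Lemma Cyl_first nu k L t : Cyl k.+1 (Cfirst nu k L) t <->
  (forall i, (i < k)%N -> ~~ hitb x p nu t i) /\ L (x k t) (p k t).
Proof.
rewrite /Cyl /Cfirst /=; split.
  move=> H; split; last by have := H k (ltnSn k); rewrite ltnn.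
  move=> i ik; have := H i (ltnW ik); rewrite ik /= in_itv /= andbT.
  by rewrite hitbP -ltNge.
move=> [H1 H2] i; rewrite ltnS leq_eqVlt => /orP [/eqP -> | ik].
  by rewrite ltnn.
rewrite ik /= in_itv /= andbT ltNge -hitbP; exact: H1.
Qed.

Lemma Cyl_first_istar nu k L t : Cyl k.+1 (Cfirst nu k L) t ->
  (forall b r, L b r -> r <= nu b) -> istar x p nu t = Some k.
Proof.
move=> /Cyl_first [H1 H2] HL; apply/istarP; split => //.
by rewrite hitbP; apply: HL.
Qed.

Lemma Cfirst_meas nu k L : (forall b, measurable (L b)) ->
  forall j b, measurable (Cfirst nu k L j b).
Proof. by move=> mL j b; rewrite /Cfirst; case: ifP => _ //; exact: measurable_itv. Qed.

Definition RC (mu : 'I_q -> R) delta k :=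
  Cfirst mu k (fun b => `[(1 - delta) * mu b, mu b]%classic).

Lemma Rset_eq mu delta : Rset x p mu delta = \bigcup_k Cyl k.+1 (RC mu delta k).
Proof.
apply/seteqP; split => t /=.
  move=> [k [/istarP [H1 H2] H3]]; exists k => //; apply/Cyl_first; split => //=.
  by rewrite in_itv /= H3 -hitbP.
move=> [k _ /Cyl_first [H1]]; rewrite /= in_itv /= => /andP [H2 H3].
by exists k; split => //; apply/istarP; rewrite hitbP.
Qed.

Lemma RC_triv mu delta : trivIset setT (fun k => Cyl k.+1 (RC mu delta k)).
Proof.
move=> i j _ _ [t [Hi Hj]].
have E b r : `[(1 - delta) * mu b, mu b]%classic r -> r <= mu b.
  by rewrite /= in_itv /= => /andP [].
have := Cyl_first_istar Hi E; rewrite (Cyl_first_istar Hj E).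
by case.
Qed.

Lemma simplex_le1 (mu : 'I_q -> R) : in_simplex mu -> forall b, mu b <= 1.
Proof.
move=> [h0 h1] b; rewrite -h1 (bigD1 b) //= lerDl.
by apply: sumr_ge0 => i _; exact: h0.
Qed.

Lemma qinv_facts : 0 < q%:R^-1 :> R /\ q%:R^-1 <= 1 :> R.
Proof.
split; first by rewrite invr_gt0 ltr0n.
by rewrite invf_le1 ?ltr0n // ler1n.
Qed.

Lemma RC_prob mu delta k : in_simplex mu -> 0 <= delta -> delta <= 1 ->
  P (Cyl k.+1 (RC mu delta k)) = (q%:R^-1 * delta * (1 - q%:R^-1) ^+ k)%:E.
Proof.
move=> hmu d0 d1; have [h0 h1] := hmu; have hle := simplex_le1 hmu.
rewrite (@Cyl_prob _ _ (fun j b => if (j < k)%N then 1 - mu b else delta * mu b)).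
- congr EFin; rewrite big_ord_recr /= ltnn.
  rewrite (eq_bigr (fun _ => 1 - q%:R^-1)); last first.
    move=> i _; rewrite ltn_ord sumrB sumr_const card_ord h1 mulrBr mulVf ?mulr1 //.
  rewrite prodr_const card_ord -mulr_sumr h1; ring.
- by apply: Cfirst_meas => b; exact: measurable_itv.
move=> j b; rewrite /RC /Cfirst; case: ifP => _; first by rewrite unif_oinf.
rewrite unif_cc; first by congr EFin; ring.
- by apply: mulr_ge0 => //; rewrite subr_ge0.
- have := h0 b; nra.
- exact: hle.
Qed.

Lemma Rset_prob mu delta : in_simplex mu -> 0 <= delta -> delta <= 1 ->
  P (Rset x p mu delta) = delta%:E.
Proof.
move=> hmu d0 d1; rewrite Rset_eq measure_bigcup //=; last first.
- exact: RC_triv.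
- by move=> k _; apply: Cyl_meas; apply: Cfirst_meas => b; exact: measurable_itv.
rewrite [X in X = _](_ : _ = \sum_(i <oo) P (Cyl i.+1 (RC mu delta i)))%E;
  last by apply: eq_eseriesl => i; rewrite /= in_setT.
rewrite (eq_eseriesr (g := fun k => ((q%:R^-1 * delta) * (1 - q%:R^-1) ^+ k)%:E));
  last by move=> k _; rewrite RC_prob.
have [hq1 hq2] := qinv_facts.
have g1 : (0 : R) <= 1 - q%:R^-1 by rewrite subr_ge0.
have g2 : (1 - q%:R^-1 : R) < 1 by rewrite ltrBlDr ltrDl.
rewrite geomE //.
congr EFin; rewrite (_ : 1 - (1 - q%:R^-1) = q%:R^-1) ?invrK; last by ring.
by rewrite mulrAC mulVf ?mul1r // pnatr_eq0.
Qed.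

Definition MCset (nu : 'I_q -> R) a := [set t | MinCoupler x p nu t = Some a].

Lemma MCset_meas nu a : measurable (MCset nu a).
Proof.
rewrite (_ : MCset nu a = \bigcup_j Cyl j.+1 (Cfirst nu j
   (fun b => if b == a then `]-oo, nu b]%classic else set0))).
  apply: bigcup_measurable => j _; apply: Cyl_meas; apply: Cfirst_meas => b.
  by case: ifP => _ //; exact: measurable_itv.
apply/seteqP; split => t; rewrite /MCset /MinCoupler /=.
  case E: istar => [j|] //= [<-]; exists j => //; apply/Cyl_first.
  move: E => /istarP [H1 H2]; split => //; rewrite eqxx /= in_itv /=.
  by rewrite -hitbP.
move=> [j _ /Cyl_first [H1]]; case: eqP => // <-; rewrite /= in_itv /= => H2.
have -> // : istar x p nu t = Some j by apply/istarP; rewrite hitbP.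
Qed.

Lemma Rset_meas mu delta : measurable (Rset x p mu delta).
Proof.
rewrite Rset_eq; apply: bigcup_measurable => k _; apply: Cyl_meas.
by apply: Cfirst_meas => b; exact: measurable_itv.
Qed.

Lemma ER_meas mu ups delta :
  measurable ([set t | MinCoupler x p mu t <> MinCoupler x p ups t] `&` Rset x p mu delta).
Proof.
rewrite (_ : _ `&` _ = Rset x p mu delta `\`
   \bigcup_(a in [set: 'I_q]) (MCset mu a `&` MCset ups a)).
  apply: measurableD; first exact: Rset_meas.
  apply: fin_bigcup_measurable; first exact: finite_finset.
  by move=> a _; apply: measurableI; exact: MCset_meas.
apply/seteqP; split => t /=.
  move=> [Hne HR]; split => // -[a _ [/= H1 H2]]; apply: Hne.
  by rewrite /MCset /= in H1 H2; rewrite H1 H2.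
move=> [HR Hn]; split => // Heq; apply: Hn.
move: (HR) => [k [Hk _]].
exists (x k t) => //; rewrite /MCset /= -Heq /MinCoupler Hk //.
Qed.

Definition Mx (mu ups : 'I_q -> R) b := Num.max (mu b) (ups b).

Definition FC (mu ups : 'I_q -> R) delta a k m : nat -> 'I_q -> set R := fun j b =>
  if (j < k)%N then `]Mx mu ups b, +oo[%classic
  else if j == k then
    (if b == a then (if ups a < (1 - delta) * mu a then
       `[(1 - delta) * mu b, mu b]%classic else set0) else set0)
  else if (j < (k + m).+1)%N then `]ups b, +oo[%classic
  else (if b == a then set0 else `[0, ups b]%classic).

Definition Fset mu ups delta a k m := Cyl (k + m).+2 (FC mu ups delta a k m).

Lemma F_info mu ups delta a k m t : Fset mu ups delta a k m t ->
  [/\ istar x p mu t = Some k, istar x p ups t = Some (k + m).+1,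
      MinCoupler x p mu t = Some a, MinCoupler x p ups t <> Some a &
      Rset x p mu delta t].
Proof.
move=> H.
have Hk := H k (leq_trans (leq_addr m k.+1) (ltnW (ltnSn _))).
rewrite /FC ltnn eqxx in Hk.
move: Hk; case: eqP => // xk; case: ifP => // Sa; rewrite /= in_itv /= => /andP [l1 l2].
have Hb i : (i < k)%N -> Mx mu ups (x i t) < p i t.
  move=> ik; have := H i (leq_trans ik (leq_trans (leq_addr m k) (ltnW (ltnW (ltnSn _))))).
  by rewrite /FC ik /= in_itv /= andbT.
have imu : istar x p mu t = Some k.
  apply/istarP; split; last by rewrite hitbP.
  move=> i ik; rewrite hitbP -ltNge; apply: le_lt_trans (Hb i ik).
  by rewrite /Mx le_max lexx.
have iups : istar x p ups t = Some (k + m).+1.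
  apply/istarP; split.
    move=> i ikm; case: (ltngtP i k) => [ik|ki|->].
    - rewrite hitbP -ltNge; apply: le_lt_trans (Hb i ik).
      by rewrite /Mx le_max lexx orbT.
    - have := H i (ltnW ikm); rewrite /FC ltnNge (ltnW ki) /= gtn_eqF //.
      by rewrite ikm /= in_itv /= andbT hitbP -ltNge.
    - rewrite hitbP -ltNge xk; apply: lt_le_trans Sa _; by rewrite -xk.
  have := H (k + m).+1 (ltnSn _); rewrite /FC ltnNge ltnW ?ltnS ?leq_addr //=.
  rewrite gtn_eqF ?ltnS ?leq_addr // ltnn.
  by case: eqP => // _; rewrite /= in_itv /= => /andP [_]; rewrite hitbP.
split => //.
- by rewrite /MinCoupler imu /= xk.
- rewrite /MinCoupler iups /= => -[] e.
  have := H (k + m).+1 (ltnSn _); rewrite /FC ltnNge ltnW ?ltnS ?leq_addr //=.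
  by rewrite gtn_eqF ?ltnS ?leq_addr // ltnn e eqxx.
- by exists k; split => //; rewrite xk.
Qed.

Definition cS (mu ups : 'I_q -> R) delta a :=
  if ups a < (1 - delta) * mu a then delta * mu a else 0.

Lemma Mx_bounds mu ups b : in_simplex mu -> in_simplex ups ->
  0 <= Mx mu ups b /\ Mx mu ups b <= 1.
Proof.
move=> hmu hups; split; first by rewrite /Mx le_max (proj1 hmu).
by rewrite /Mx ge_max !simplex_le1.
Qed.

Lemma prod_split3 (G : nat -> R) k m : \prod_(j < (k + m).+2) G j =
  (\prod_(0 <= j < k) G j) * G k * (\prod_(k.+1 <= j < (k + m).+1) G j) * G (k + m).+1.
Proof.
rewrite -(big_mkord xpredT).
rewrite (@big_cat_nat _ _ _ k) //=; last by lia.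
rewrite (@big_ltn _ _ _ k (k + m).+2); last by lia.
rewrite (@big_cat_nat _ _ _ (k + m).+1 k.+1 (k + m).+2) //=; last by lia.
by rewrite big_nat1 !mulrA.
Qed.

Definition uF (mu ups : 'I_q -> R) delta a k m j b :=
  if (j < k)%N then 1 - Mx mu ups b
  else if j == k then (if b == a then cS mu ups delta a else 0)
  else if (j < (k + m).+1)%N then 1 - ups b
  else (if b == a then 0 else ups b).

Lemma F_prob mu ups delta a k m : in_simplex mu -> in_simplex ups ->
  0 <= delta -> delta <= 1 ->
  P (Fset mu ups delta a k m) =
  ((1 - q%:R^-1 * \sum_b Mx mu ups b) ^+ k * (q%:R^-1 * cS mu ups delta a)
    * (q%:R^-1 * (1 - ups a)) * (1 - q%:R^-1) ^+ m)%:E.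
Proof.
move=> hmu hups d0 d1.
rewrite /Fset (@Cyl_prob _ _ (uF mu ups delta a k m)).
- congr EFin.
  rewrite (prod_split3 (fun j => q%:R^-1 * \sum_b uF mu ups delta a k m j b)) /uF.
  rewrite (eq_big_nat _ _ (F2 := fun _ => 1 - q%:R^-1 * \sum_b Mx mu ups b)); last first.
    move=> i /andP [_ ik]; rewrite ik sumrB sumr_const card_ord mulrBr mulVf //.
  rewrite [X in _ * X * _](eq_big_nat _ _ (F2 := fun _ => 1 - q%:R^-1)); last first.
    move=> i /andP [ki ikm]; rewrite ltnNge (ltnW ki) /= gtn_eqF // ikm.
    rewrite sumrB sumr_const card_ord (proj2 hups) mulrBr mulVf ?mulr1 //.
  rewrite !prodr_const_nat subn0 ltnn eqxx.
  rewrite ltnNge leqW ?leq_addr //= gtn_eqF ?ltnS ?leq_addr // ltnn.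
  rewrite -big_mkcond /= big_pred1_eq.
  have -> : \sum_(b < q) (if b == a then 0 else ups b) = 1 - ups a.
    rewrite -(proj2 hups) (bigD1 a) //= eqxx add0r [X in _ = X - _](bigD1 a) //=.
    rewrite addrC addrK; apply: eq_bigr => b /negbTE ->; done.
  have -> : ((k + m).+1 - k.+1)%N = m by lia.
  ring.
- move=> j b; rewrite /FC; repeat (case: ifP => _);
  first [exact: measurable_itv | exact: measurable0].
move=> j b; rewrite /FC /uF; have [M0 M1] := Mx_bounds b hmu hups.
have [h0 h1] := hmu; have [g0 g1] := hups.
case: ifP => _; first by rewrite unif_oinf.
case: ifP => _.
  case: eqP => [->|_]; last by rewrite unif0.
  rewrite /cS; case: ifP => _; last by rewrite unif0.
  rewrite unif_cc.
  - by congr EFin; ring.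
  - by apply: mulr_ge0 => //; rewrite subr_ge0.
  - have := h0 a; nra.
  - exact: simplex_le1.
case: ifP => _; first by rewrite unif_oinf ?simplex_le1.
case: eqP => _; first by rewrite unif0.
by rewrite unif_cc ?subr0 // simplex_le1.
Qed.

Lemma FC_meas mu ups delta a k m j b : measurable (FC mu ups delta a k m j b).
Proof.
rewrite /FC; repeat (case: ifP => _); first [exact: measurable_itv | exact: measurable0].
Qed.

Lemma F_meas mu ups delta a k m : measurable (Fset mu ups delta a k m).
Proof. by apply: Cyl_meas => j b; exact: FC_meas. Qed.

Definition Gset mu ups delta a k := \bigcup_m Fset mu ups delta a k m.
Definition Hset mu ups delta a := \bigcup_k Gset mu ups delta a k.

Lemma G_meas mu ups delta a k : measurable (Gset mu ups delta a k).
Proof. by apply: bigcup_measurable => m _; exact: F_meas. Qed.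

Lemma H_meas mu ups delta a : measurable (Hset mu ups delta a).
Proof. by apply: bigcup_measurable => k _; exact: G_meas. Qed.

Lemma H_info mu ups delta a t : Hset mu ups delta a t ->
  [/\ MinCoupler x p mu t = Some a, MinCoupler x p ups t <> Some a &
      Rset x p mu delta t].
Proof. by move=> [k _ [m _ /F_info [_ _ ? ? ?]]]. Qed.

Lemma sum_setT (f : nat -> \bar R) :
  (\sum_(i <oo | i \in [set: nat]) f i = \sum_(i <oo) f i)%E.
Proof. by apply: eq_eseriesl => i; rewrite /= in_setT. Qed.

Lemma G_prob mu ups delta a k : in_simplex mu -> in_simplex ups ->
  0 <= delta -> delta <= 1 ->
  P (Gset mu ups delta a k) =
  ((q%:R^-1 * cS mu ups delta a)
    * (q%:R^-1 * (1 - ups a)) * (1 - (1 - q%:R^-1))^-1 *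
   (1 - q%:R^-1 * \sum_b Mx mu ups b) ^+ k)%:E.
Proof.
move=> hmu hups d0 d1; rewrite /Gset measure_bigcup //=; last first.
- move=> m1 m2 _ _ [t [/F_info [_ e1 _ _ _] /F_info [_ e2 _ _ _]]].
  by move: e1; rewrite e2 => -[]; lia.
- by move=> m _; exact: F_meas.
rewrite sum_setT.
under eq_eseriesr => m _ do rewrite F_prob //.
have [hq1 hq2] := qinv_facts.
have g1 : (0 : R) <= 1 - q%:R^-1 by rewrite subr_ge0.
have g2 : (1 - q%:R^-1 : R) < 1 by rewrite ltrBlDr ltrDl.
by rewrite geomE //; congr EFin; ring.
Qed.

Lemma M_bounds mu ups : in_simplex mu -> in_simplex ups ->
  1 <= \sum_b Mx mu ups b /\ \sum_b Mx mu ups b <= 2 /\ \sum_b Mx mu ups b <= q%:R.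
Proof.
move=> hmu hups; split; [|split].
- rewrite -(proj2 hmu); apply: ler_sum => b _; by rewrite /Mx le_max lexx.
- rewrite (_ : 2 = \sum_b (mu b + ups b)); last by rewrite big_split /= (proj2 hmu) (proj2 hups).
  apply: ler_sum => b _; rewrite /Mx ge_max.
  by rewrite lerDl lerDr (proj1 hmu) (proj1 hups).
- have -> : (q%:R : R) = \sum_(b < q) (1 : R) by rewrite sumr_const card_ord.
  by apply: ler_sum => b _; have [] := Mx_bounds b hmu hups.
Qed.

Lemma H_prob mu ups delta a : in_simplex mu -> in_simplex ups ->
  0 <= delta -> delta <= 1 ->
  P (Hset mu ups delta a) =
  ((q%:R^-1 * cS mu ups delta a) * (q%:R^-1 * (1 - ups a)) * (1 - (1 - q%:R^-1))^-1
    * (1 - (1 - q%:R^-1 * \sum_b Mx mu ups b))^-1)%:E.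
Proof.
move=> hmu hups d0 d1; rewrite /Hset measure_bigcup //=; last first.
- move=> k1 k2 _ _ [t [[m1 _ /F_info [e1 _ _ _ _]] [m2 _ /F_info [e2 _ _ _ _]]]].
  by move: e1; rewrite e2 => -[].
- by move=> k _; exact: G_meas.
rewrite sum_setT.
under eq_eseriesr => k _ do rewrite G_prob //.
have [hq1 hq2] := qinv_facts.
have [M1 [M2 M3]] := M_bounds hmu hups.
rewrite geomE //.
- rewrite subr_ge0.
  rewrite -[X in _ <= X](@mulVf _ q%:R) ?pnatr_eq0 //.
  by rewrite ler_pM2l.
- rewrite ltrBlDr ltrDl; apply: mulr_gt0 => //; lra.
Qed.

Lemma main_sec mu ups delta : in_simplex mu -> in_simplex ups -> 0 < delta -> delta <= 1 ->
  condprob P [set t | MinCoupler x p mu t <> MinCoupler x p ups t] (Rset x p mu delta)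
  >= (1 - nu_max ups) / 2 * \sum_(a < q | ups a < (1 - delta) * mu a) mu a.
Proof.
move=> hmu hups d0 d1; have d0' := ltW d0.
rewrite /condprob.
set ER := _ `&` _.
have mER : measurable ER := ER_meas mu ups delta.
have dH : forall a b, a != b -> Hset mu ups delta a `&` Hset mu ups delta b = set0.
  move=> a b ab; apply/seteqP; split => t // [/H_info [e1 _ _] /H_info [e2 _ _]].
  by move: ab; rewrite e1 in e2; case: e2 => ->; rewrite eqxx.
have [mU PU] := P_finU (fun a => H_meas mu ups delta a) dH (index_enum_uniq 'I_q).
have sU : [set t | exists2 a, a \in index_enum 'I_q & Hset mu ups delta a t] `<=` ER.
  move=> t [a _ /H_info [e1 e2 e3]]; split => //=; rewrite e1 => e; exact: e2 (esym e).
have hle : (\sum_(a : 'I_q) P (Hset mu ups delta a) <= P ER)%E.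
  by rewrite -PU; exact: (le_measure P (mem_set mU) (mem_set mER) sU).
move: hle; under eq_bigr => a _ do rewrite H_prob //.
rewrite sumEFin => hle.
have fER : P ER = (fine (P ER))%:E.
  rewrite fineK // ge0_fin_numE //; apply: le_lt_trans (probability_le1 P mER) _.
  exact: ltry.
rewrite fER lee_fin in hle.
rewrite Rset_prob //= ler_pdivlMr //; apply: le_trans hle.
have [hq1 hq2] := qinv_facts.
have [M1 [M2 M3]] := M_bounds hmu hups.
set M := \sum_b Mx mu ups b in M1 M2 M3 *.
have ev a : q%:R^-1 * cS mu ups delta a * (q%:R^-1 * (1 - ups a)) *
   (1 - (1 - q%:R^-1))^-1 * (1 - (1 - q%:R^-1 * M))^-1 = cS mu ups delta a * ((1 - ups a) / M).
  have Mn : M != 0 by apply/eqP => M0; rewrite M0 in M1; lra.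
  have qn : (q%:R : R) != 0 by rewrite pnatr_eq0.
  field; rewrite Mn /=; apply/andP; split; apply/eqP => h.
    by have := ler0n R Q; lra.
  lra.
rewrite [X in _ <= X](eq_bigr (fun a => cS mu ups delta a * ((1 - ups a) / M)));
  last by move=> a _; exact: ev.
have umax1 : nu_max ups <= 1.
  by apply: bigmax_le => // i _; exact: simplex_le1.
rewrite big_mkcond /= mulr_sumr mulr_suml; apply: ler_sum => a _.
have hh : (1 - nu_max ups) / 2 <= (1 - ups a) / M.
  rewrite ler_pdivlMr; last lra.
  have : ups a <= nu_max ups by exact: le_bigmax.
  nra.
rewrite /cS; case: ifP => Sa; last by rewrite mulr0 !mul0r.
rewrite (_ : _ * _ * _ = (delta * mu a) * ((1 - nu_max ups) / 2)); last by ring.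
by apply: ler_wpM2l => //; apply: mulr_ge0 => //; exact: (proj1 hmu).
Qed.
End Seed.

Theorem lemma6p2 (R : realType) (q : nat) (d : measure_display)
    (T : measurableType d) (P : probability T R)
    (x : nat -> T -> 'I_q) (p : nat -> T -> R)
    (mu upsilon : 'I_q -> R) (delta : R) :
  uniform_seed P x p ->
  in_simplex mu -> in_simplex upsilon ->
  0 < delta -> delta <= 1 ->
  condprob P [set t | MinCoupler x p mu t <> MinCoupler x p upsilon t]
             (Rset x p mu delta)
  >= (1 - nu_max upsilon) / 2 *
     \sum_(a < q | upsilon a < (1 - delta) * mu a) mu a.
Proof.
case: q x mu upsilon => [|Q] x mu upsilon HS hmu hups d0 d1.
  by case: hmu => _; rewrite big_ord0 => /eqP; rewrite eq_sym oner_eq0.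
exact: (main_sec HS).
Qed.
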